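(* Let $X$ be a (real or complex) Banach space, $S$ a Hausdorff topological space, and $J\colon X\to C^{b}(S)$ a nice embedding (see context). Then for every $T\in L(X)$ there is a scalar $\lambda$ with $|\lambda|=1$ such that $\lambda T$ satisfies the Daugavet equation $\|\mathrm{Id}+\lambda T\|=1+\|\lambda T\|$.
   Context: $C^{b}(S)$ denotes the sup-normed Banach space of bounded continuous scalar-valued functions on $S$, and $\delta_s$ the functional $f\mapsto f(s)$. A closed subspace $F$ of a Banach space $E$ is an $L$-summand if there is a projection $\Pi$ of $E$ onto $F$ with $\|\xi\|=\|\Pi\xi\|+\|\xi-\Pi\xi\|$ for all $\xi\in E$. A linear map $J\colon X\to C^b(S)$ is a nice embedding if $J$ is an isometry and for every $s\in S$: (N1) $p_s:=J^*(\delta_s)$ satisfies $\|p_s\|=1$; (N2) $\operatorname{lin}\{p_s\}$ is an $L$-summand in $X^*$. $L(X)$ denotes the bounded linear operators on $X$. *)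

(* Defs.v *)
(* Scalars: K : numFieldType (instantiated with a
   realType R for real Banach spaces and with R[i] = complex R for complex
   Banach spaces).  Banach space over K : completeNormedModType K. *)
From mathcomp Require Import all_boot all_algebra.
From mathcomp Require Import all_classical all_reals all_analysis.
From mathcomp Require Export complex.
Export Num.Theory GRing.Theory.
Export numFieldNormedType.Exports.
Set Implicit Arguments.
Unset Strict Implicit.
Unset Printing Implicit Defensive.
Local Open Scope ring_scope.
Local Open Scope classical_set_scope.

Section Defs.
Variable K : numFieldType.

Definition is_sup (P : set K) (c : K) : Prop :=
  (forall v, P v -> v <= c) /\ (forall b, (forall v, P v -> v <= b) -> c <= b).

Variable X : normedModType K.

Definition lin_functional (f : X -> K) : Prop :=
  forall (a : K) (x y : X), f (a *: x + y) = a * f x + f y.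

Definition in_dual (f : X -> K) : Prop :=
  lin_functional f /\ exists M : K, forall x, `|f x| <= M * `|x|.

Definition dual_norm (f : X -> K) (c : K) : Prop :=
  is_sup [set v | exists x : X, `|x| <= 1 /\ v = `|f x|] c.

Definition bounded_operator (T : X -> X) : Prop :=
  (forall (a : K) (x y : X), T (a *: x + y) = a *: T x + T y) /\
  exists M : K, forall x, `|T x| <= M * `|x|.

Definition op_norm (T : X -> X) (c : K) : Prop :=
  is_sup [set v | exists x : X, `|x| <= 1 /\ v = `|T x|] c.

Definition Daugavet_eq (T : X -> X) : Prop :=
  exists c d : K, op_norm (fun x => x + T x) c /\ op_norm T d /\ c = 1 + d.

Definition L_summand_line (p : X -> K) : Prop :=
  exists Pi : (X -> K) -> (X -> K),
    (forall xi, in_dual xi -> in_dual (Pi xi)) /\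
    [/\
        forall (a : K) xi eta, in_dual xi -> in_dual eta ->
          Pi (fun x => a * xi x + eta x) = (fun x => a * Pi xi x + Pi eta x),
        forall xi, in_dual xi -> Pi (Pi xi) = Pi xi,
        forall xi, in_dual xi -> exists a : K, Pi xi = (fun x => a * p x),
        forall a : K, exists xi, in_dual xi /\ Pi xi = (fun x => a * p x) &
        forall xi, in_dual xi -> forall n1 n2 n3 : K,
          dual_norm xi n1 -> dual_norm (Pi xi) n2 ->
          dual_norm (fun x => xi x - Pi xi x) n3 -> n1 = n2 + n3].

Variable S : topologicalType.

(* J : X -> C^b(S) is a nice embedding.  J x is a continuous function
   S -> K; isometry means ||x|| = sup_s |J x s| (which also gives
   boundedness of J x); p_s := J^*(delta_s) = (x |-> J x s). *)
Definition nice_embedding (J : X -> (S -> K)) : Prop :=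
  [/\ forall (a : K) (x y : X) (s : S), J (a *: x + y) s = a * J x s + J y s,
      forall x, continuous (J x),
      forall x, is_sup [set v | exists s : S, v = `|J x s|] `|x|,
      forall s : S, dual_norm (fun x => J x s) 1 &
      forall s : S, L_summand_line (fun x => J x s)].

End Defs.

Definition cor2p2_over (K : numFieldType) : Prop :=
  forall (X : completeNormedModType K) (S : topologicalType),
    hausdorff_space S -> [set: S] !=set0 ->
    forall J : X -> (S -> K), nice_embedding J ->
    forall T : X -> X, bounded_operator T ->
    exists lam : K, `|lam| = 1 /\ Daugavet_eq (fun x => lam *: T x).

(* Main.v *)
Require Import Defs.
From mathcomp Require Import all_boot all_algebra.
From mathcomp Require Import all_classical all_reals all_analysis.
From mathcomp Require Import complex.
From mathcomp Require Import ring lra.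
Import GRing.Theory Num.Theory. Import order.Order.TTheory.
Local Open Scope ring_scope.
Local Open Scope classical_set_scope.

Section Gen.
Variable K : numFieldType.

Lemma is_sup_unique (P : set K) c c' : is_sup P c -> is_sup P c' -> c = c'.
Proof. by move=> [u l] [u' l']; apply/le_anti; rewrite (l c' u') (l' c u). Qed.

Lemma is_sup_approx (P : set K) c e : (forall v, P v -> 0 <= v) -> 0 <= c ->
  is_sup P c -> 0 < e -> exists v, P v /\ c - e < v.
Proof.
move=> Pge c0 [u l] e0.
apply: contrapT => /forallNP H.
have : c <= c - e.
  apply: l => v Pv; rewrite real_leNgt; last 2 first.
  - exact: ger0_real (Pge _ Pv).
  - by rewrite rpredB // ?ger0_real // ltW.
  by apply/negP => lt; apply: (H v); split.
by rewrite lerBDr gerDl => /(lt_le_trans e0); rewrite ltxx.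
Qed.

Lemma bnd_aux (M a b : K) : 0 <= a -> a <= M * b -> 0 <= b -> b <= 1 -> a <= `|M|.
Proof.
move=> a0 aM b0 b1.
case: (eqVneq b 0) => [b00|bn0].
  by move: aM; rewrite b00 mulr0 => aM; apply: (le_trans aM).
have bp : 0 < b by rewrite lt_def bn0 b0.
have M0 : 0 <= M by rewrite -(pmulr_lge0 M bp); exact: le_trans aM.
rewrite ger0_norm //; apply: (le_trans aM); rewrite -{2}[M]mulr1; exact: ler_wpM2l.
Qed.

Hypothesis HS : forall (P : set K) (b : K), P 0 ->
  (forall v, P v -> 0 <= v /\ v <= b) -> exists c, is_sup P c.

Variable X : normedModType K.

Lemma lin0 (f : X -> K) : lin_functional f -> f 0 = 0.
Proof.
move=> lf; have := lf (-1) 0 0.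
by rewrite scaleN1r oppr0 addr0 mulN1r addNr.
Qed.

Lemma dual_ex (f : X -> K) : in_dual f -> exists n, dual_norm f n.
Proof.
case=> lin [M HM]; apply: (HS _ (`|M|)).
  by exists 0; rewrite normr0 ler01 lin0 ?normr0.
move=> v [x [x1 ->]]; split => //.
apply: (@bnd_aux M _ `|x| (normr_ge0 _) (HM x)) => //.
Qed.

Lemma in_dual_comb (b : K) (f g : X -> K) : in_dual f -> in_dual g ->
  in_dual (fun y => b * f y + g y).
Proof.
case=> lf [Mf HMf] [lg [Mg HMg]]; split.
  by move=> a x y; rewrite lf lg; ring.
exists (`|b| * Mf + Mg) => x.
apply: (le_trans (ler_normD _ _)); rewrite mulrDl normrM -mulrA.
by apply: lerD => //; apply: ler_wpM2l.
Qed.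

Arguments dual_ex [f].
Arguments in_dual_comb b [f g].

Lemma dual_scale (f : X -> K) n b : f 0 = 0 -> dual_norm f n ->
  dual_norm (fun x => b * f x) (`|b| * n).
Proof.
move=> f0 [u l]; split.
  move=> v [x [x1 ->]]; rewrite normrM; apply: ler_wpM2l => //; apply: u; by exists x.
move=> B HB.
have B0 : 0 <= B by apply: HB; exists 0; rewrite normr0 ler01 f0 mulr0 normr0.
case: (eqVneq b 0) => [->|bn0]; first by rewrite normr0 mul0r.
have bp : 0 < `|b| by rewrite normr_gt0.
rewrite -ler_pdivlMl //.
apply: l => v [x [x1 ->]]; rewrite ler_pdivlMl // -normrM; apply: HB; by exists x.
Qed.

Variable S : topologicalType.
Variable J : X -> S -> K.
Hypothesis HJ : nice_embedding J.
Variable T : X -> X.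
Hypothesis HT : bounded_operator T.

Lemma J_le x s : `|J x s| <= `|x|.
Proof. by case: HJ => _ _ iso _ _; case: (iso x) => u _; apply: u; exists s. Qed.

Lemma J_lin a x y s : J (a *: x + y) s = a * J x s + J y s.
Proof. by case: HJ. Qed.

Lemma J0 s : J 0 s = 0.
Proof.
have := J_lin (-1) 0 0 s.
by rewrite scaleN1r oppr0 addr0 mulN1r addNr.
Qed.

Lemma T_lin a x y : T (a *: x + y) = a *: T x + T y.
Proof. by case: HT. Qed.

Lemma T0 : T 0 = 0.
Proof.
have := T_lin (-1) 0 0.
by rewrite !scaleN1r oppr0 addr0 addNr.
Qed.

Lemma Tb : exists B, forall x, `|x| <= 1 -> `|T x| <= B.
Proof.
case: HT => _ [M HM]; exists `|M| => x x1.
by apply: (@bnd_aux M _ `|x| (normr_ge0 _) (HM x)) => //.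
Qed.

Lemma op_norm_ex (mu : K) : exists c, op_norm (fun x => x + mu *: T x) c.
Proof.
case: Tb => B HB.
apply: (HS _ (1 + `|mu| * B)).
  by exists 0; rewrite normr0 ler01 T0 scaler0 addr0 normr0.
move=> v [x [x1 ->]]; split => //.
apply: (le_trans (ler_normD _ _)); apply: lerD => //; rewrite normrZ.
by apply: ler_wpM2l => //; exact: HB.
Qed.

Lemma opT_ex : exists N, op_norm T N.
Proof.
case: Tb => B HB.
apply: (HS _ (B)).
  by exists 0; rewrite normr0 ler01 T0 normr0.
by move=> v [x [x1 ->]]; split => //; exact: HB.
Qed.

Lemma op_upper lam c N : `|lam| = 1 -> op_norm T N ->
  op_norm (fun x => x + lam *: T x) c -> c <= 1 + N.
Proof.
move=> l1 [uN _] [_ l]; apply: l => v [x [x1 ->]].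
apply: (le_trans (ler_normD _ _)); apply: lerD => //; rewrite normrZ l1 mul1r.
by apply: uN; exists x.
Qed.

Lemma op_lip lam mu c c' N : op_norm T N ->
  op_norm (fun x => x + lam *: T x) c -> op_norm (fun x => x + mu *: T x) c' ->
  c <= c' + `|lam - mu| * N.
Proof.
move=> [uN _] [_ l] [u' _]; apply: l => v [x [x1 ->]].
have -> : x + lam *: T x = (x + mu *: T x) + (lam - mu) *: T x.
  by rewrite scalerBl -addrA (addrC (mu *: T x)) subrK.
apply: (le_trans (ler_normD _ _)); apply: lerD.
  by apply: u'; exists x.
by rewrite normrZ; apply: ler_wpM2l => //; apply: uN; exists x.
Qed.

Lemma op_scale lam N : `|lam| = 1 -> op_norm T N -> op_norm (fun x => lam *: T x) N.
Proof.
move=> l1; rewrite /op_norm.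
have -> : [set v | exists x : X, `|x| <= 1 /\ v = `|lam *: T x|] =
          [set v | exists x : X, `|x| <= 1 /\ v = `|T x|].
  by apply/seteqP; split => v [x [x1 ->]]; exists x; rewrite normrZ l1 mul1r.
done.
Qed.

Lemma daug_of lam N : `|lam| = 1 -> op_norm T N ->
  op_norm (fun x => x + lam *: T x) (1 + N) -> Daugavet_eq (fun x => lam *: T x).
Proof.
move=> l1 HN Hc; exists (1 + N), N; split => //; split => //.
exact: op_scale.
Qed.


Lemma p_dual s : in_dual (fun x => J x s).
Proof.
split; first by move=> a x y; exact: J_lin.
by exists 1 => x; rewrite mul1r; exact: J_le.
Qed.

Lemma Tp_dual s : in_dual (fun x => J (T x) s).
Proof.
split; first by move=> a x y; rewrite T_lin J_lin.
case: HT => _ [M HM]; exists M => x; exact: le_trans (J_le _ _) (HM x).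
Qed.

Lemma key e N : 0 < e -> op_norm T N -> exists lam : K, `|lam| = 1 /\
  forall c, op_norm (fun x => x + lam *: T x) c -> 1 + N - e <= c.
Proof.
move=> e0 HN.
have e20 : 0 < e / 2 by rewrite divr_gt0 // ltr0n.
have N0 : 0 <= N by case: HN => u _; apply: u; exists 0; rewrite normr0 ler01 T0 normr0.
have [v [[x [x1 ->]] Hx]] : exists v, (exists x : X, `|x| <= 1 /\ v = `|T x|) /\ N - e / 2 < v.
  by apply: is_sup_approx HN e20 => // ? [? [_ ->]].
have [w [[s ->] Hs]] : exists w, (exists s, w = `|J (T x) s|) /\ `|T x| - e / 2 < w.
  by case: HJ => _ _ iso _ _; apply: is_sup_approx (iso (T x)) e20 => // ? [? ->].
case: HJ => _ _ _ pn1 /(_ s) [Pi [Pdual [Plin Pidem Prange Ponto Pnorm]]].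
have Pp : Pi (fun y => J y s) = (fun y => J y s).
  have [xi [xid Pxi]] := Ponto 1.
  have -> : (fun y => J y s) = Pi xi by rewrite Pxi; apply/funext => y; rewrite mul1r.
  exact: Pidem.
have [a Pa] := Prange _ (Tp_dual s).
pose lam : K := if a == 0 then 1 else `|a| / a.
have [lam1 lama] : `|lam| = 1 /\ lam * a = `|a|.
  rewrite /lam; case: eqP => [->|/eqP an0]; first by rewrite normr1 mul1r normr0.
  by rewrite normrM normfV normr_id divff ?normr_eq0 // divfK.
exists lam; split => // c Hc.
have [n0 Hn0] := dual_ex (Tp_dual s).
have etad : in_dual (fun y => J (T y) s - Pi (fun y => J (T y) s) y).
  rewrite Pa.
  have -> : (fun y => J (T y) s - a * J y s) = (fun y => (-a) * J y s + J (T y) s).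
    by apply/funext=> y /=; ring.
  exact: in_dual_comb (p_dual s) (Tp_dual s).
have [ne Hne] := dual_ex etad.
have n0E : n0 = `|a| * 1 + ne.
  apply: (Pnorm _ (Tp_dual s) n0 (`|a| * 1) ne Hn0 _ Hne).
  rewrite Pa; apply: dual_scale; [exact: J0 | exact: pn1].
pose xi := fun y => lam * J (T y) s + J y s.
have xid : in_dual xi := in_dual_comb lam (Tp_dual s) (p_dual s).
have Pxi : Pi xi = fun y => (lam * a + 1) * J y s.
  have := Plin lam _ _ (Tp_dual s) (p_dual s).
  rewrite /xi => ->; rewrite Pa Pp; apply/funext => y; ring.
have [nx Hnx] := dual_ex xid.
have nxE : nx = `|lam * a + 1| * 1 + `|lam| * ne.
  apply: (Pnorm _ xid _ _ _ Hnx).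
    rewrite Pxi; apply: dual_scale; [exact: J0 | exact: pn1].
  have -> : (fun x => xi x - Pi xi x) =
            (fun y => lam * (J (T y) s - Pi (fun y => J (T y) s) y)).
    by rewrite Pxi Pa; apply/funext => y; rewrite /xi; ring.
  apply: dual_scale => //.
  by rewrite Pa /= T0 J0 mulr0 subr0.
rewrite lama lam1 mul1r !mulr1 ger0_norm ?addr_ge0 // in nxE.
rewrite mulr1 in n0E.
have nxc : nx <= c.
  case: Hc => [uc _]; case: Hnx => [_ lx]; apply: lx => ? [y [y1 ->]].
  have -> : xi y = J (y + lam *: T y) s by rewrite addrC J_lin.
  apply: le_trans (J_le _ _) _; apply: uc; by exists y.
have Jn0 : `|J (T x) s| <= n0 by case: Hn0 => u _; apply: u; exists x.
have H1 : N - e < `|J (T x) s|.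
  apply: lt_trans Hs.
  have -> : N - e = (N - e / 2) - e / 2 by rewrite -addrA -opprD -splitr.
  by rewrite ltrD2r.
apply: le_trans nxc; rewrite nxE.
have -> : `|a| + 1 + ne = 1 + n0 by rewrite n0E; ring.
rewrite -addrA lerD2l; apply: ltW; exact: lt_le_trans H1 Jn0.
Qed.

End Gen.

Arguments opT_ex [K] HS [X T] HT.
Arguments T0 [K X T] HT.
Arguments op_norm_ex [K] HS [X T] HT mu.
Arguments key [K] HS [X S J] HJ [T] HT [e N].
Arguments op_upper [K X T lam c N].
Arguments op_lip [K X T lam mu c c' N].
Arguments daug_of [K X T lam N].

Lemma HS_R (R : realType) : forall (P : set R) (b : R), P 0 ->
  (forall v, P v -> 0 <= v /\ v <= b) -> exists c, is_sup P c.
Proof.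
move=> P b P0 Hb; exists (sup P); split.
  move=> v Pv; apply: sup_upper_bound => //; split; first by exists 0.
  by exists b => w /Hb [].
by move=> B HB; apply: ge_sup => //; exists 0.
Qed.

Lemma real_case (R : realType) : cor2p2_over R.
Proof.
move=> X S _ _ J HJ T HT.
have [N HN] := opT_ex (@HS_R R) HT.
have [c1 H1] := op_norm_ex (@HS_R R) HT 1.
have [c2 H2] := op_norm_ex (@HS_R R) HT (-1).
have u1 := op_upper (normr1 _) HN H1.
have u2 := op_upper (normrN1 _) HN H2.
case: (eqVneq c1 (1 + N)) => [E1|n1].
  by exists 1; split; [exact: normr1 | apply: daug_of (normr1 _) HN _; rewrite -E1].
case: (eqVneq c2 (1 + N)) => [E2|n2].
  by exists (-1); split; [exact: normrN1 | apply: daug_of (normrN1 _) HN _; rewrite -E2].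
have l1 : c1 < 1 + N by rewrite lt_neqAle n1 u1.
have l2 : c2 < 1 + N by rewrite lt_neqAle n2 u2.
exfalso.
pose d := Num.min (1 + N - c1) (1 + N - c2).
have d1 : d <= 1 + N - c1 by rewrite ge_min lexx.
have d2 : d <= 1 + N - c2 by rewrite ge_min lexx orbT.
have d0 : 0 < d by rewrite lt_min !subr_gt0 l1 l2.
have e0 : 0 < d / 2 by rewrite divr_gt0.
have [lam [lam1 Hl]] := key (@HS_R R) HJ HT e0 HN.
have/eqP := lam1; rewrite eqr_norml => /andP [/orP [/eqP El|/eqP El] _].
  have := Hl c1; rewrite El => /(_ H1); lra.
have := Hl c2; rewrite El => /(_ H2); lra.
Qed.

Section Cplx.
Local Open Scope complex_scope.
Variable R : realType.

Lemma ge0_RC (z : R[i]) : 0 <= z -> z = (complex.Re z)%:C.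
Proof. by case: z => a b; rewrite lecE /= => /andP [/eqP -> _]. Qed.

Arguments ge0_RC [z].

Lemma Re_le (x y : R[i]) : x <= y -> complex.Re x <= complex.Re y.
Proof. by rewrite lecE => /andP [_ ->]. Qed.

Arguments Re_le [x y].

Lemma HS_C : forall (P : set R[i]) (b : R[i]), P 0 ->
  (forall v, P v -> 0 <= v /\ v <= b) -> exists c, is_sup P c.
Proof.
move=> P b P0 Hb.
pose Q := [set complex.Re v | v in P].
have hQ : has_sup Q.
  split; first by exists 0; exists 0.
  exists (complex.Re b) => _ [v Pv <-]; have [_ vb] := Hb v Pv.
  exact: Re_le.
exists (sup Q)%:C; split.
  move=> v Pv; have [v0 _] := Hb v Pv; rewrite (ge0_RC v0) lecR.
  by apply: sup_upper_bound hQ _ _; exists v.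
move=> B HB; have B0 : 0 <= B := HB 0 P0.
rewrite (ge0_RC B0) lecR; apply: ge_sup; first by exists 0; exists 0.
move=> _ [v Pv <-]; exact: Re_le (HB v Pv).
Qed.

Lemma normC_bound (a b : R) : complex.Re `|a +i* b| <= `|a| + `|b|.
Proof.
rewrite normc_def /=.
rewrite -[X in _ <= X]ger0_norm ?addr_ge0 // -sqrtr_sqr; apply: ler_wsqrtr.
have := real_normK (num_real a); have := real_normK (num_real b).
have := normr_ge0 a; have := normr_ge0 b.
nra.
Qed.


Lemma complex_case : cor2p2_over R[i].
Proof.
move=> X S _ _ J HJ T HT.
have [N HN] := opT_ex HS_C HT.
have N0 : 0 <= N.
  by case: HN => u _; apply: u; exists 0; rewrite normr0 ler01 (T0 HT) normr0.
set Nr := complex.Re N.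
have NE : N = Nr%:C := ge0_RC N0.
pose cc (mu : R[i]) := projT1 (cid (op_norm_ex HS_C HT mu)).
have Hcc mu : op_norm (fun x => x + mu *: T x) (cc mu) := projT2 (cid _).
have cc0 mu : 0 <= cc mu.
  by case: (Hcc mu) => u _; apply: u; exists 0; rewrite normr0 ler01 (T0 HT) scaler0 addr0 normr0.
pose G mu := complex.Re (cc mu).
have GE mu : cc mu = (G mu)%:C := ge0_RC (cc0 mu).
have Glip lam mu : G lam <= G mu + complex.Re `|lam - mu| * Nr.
  have := op_lip HN (Hcc lam) (Hcc mu).
  by rewrite GE (GE mu) NE (ge0_RC (normr_ge0 (lam - mu))) -rmorphM -rmorphD lecR.
have C1 : (1 : R[i]) = (1 : R)%:C by [].
have Gup mu : `|mu| = 1 -> G mu <= 1 + Nr.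
  move=> mu1; have := op_upper mu1 HN (Hcc mu).
  by rewrite GE NE C1 -rmorphD lecR.
have Gdaug mu : `|mu| = 1 -> 1 + Nr <= G mu -> Daugavet_eq (fun x => mu *: T x).
  move=> mu1 h.
  have e : cc mu = 1 + N.
    apply/le_anti; rewrite (op_upper mu1 HN (Hcc mu)) /=.
    by rewrite GE NE C1 -rmorphD lecR.
  by apply: (daug_of mu1 HN); rewrite -e; exact: Hcc.
pose s (x : R) := Num.sqrt (1 - x * x).
pose ph (b : bool) (x : R) : R[i] := x +i* (if b then s x else - s x).
have ph1 b x : -1 <= x <= 1 -> `|ph b x| = 1.
  move=> xI; rewrite normc_def /=.
  have -> : (if b then s x else - s x) ^+ 2 = 1 - x * x.
    by case: b; rewrite ?sqrrN sqr_sqrtr //; nra.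
  by rewrite expr2 addrC subrK sqrtr1.
have scont y : {for y, continuous s}.
  apply: (@continuous_comp _ _ _ (fun x : R => 1 - x * x) Num.sqrt).
    apply: continuousB; first exact: cst_continuous.
    by apply: continuousM; exact: cvg_id.
  exact: sqrt_continuous.
have fcont b : continuous (fun x => G (ph b x)).
  move=> y; apply/cvgrPdist_le => eps eps0.
  pose del := eps / (2 * (Nr + 1)).
  have Nr0 : 0 <= Nr by rewrite -lecR -NE.
  have del0 : 0 < del by rewrite divr_gt0 // mulr_gt0 // ltr_wpDl.
  have delE : del * (2 * (Nr + 1)) = eps.
    by rewrite /del divfK // mulf_neq0 // gt_eqF // ltr_wpDl.
  have /cvgrPdist_le/(_ del del0) ns := scont y.
  have /cvgrPdist_le/(_ del del0) nx : (fun t : R => t) @ y --> y := cvg_id.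
  apply: filterS2 ns nx => t h1 h2.
  have B1 : complex.Re `|ph b y - ph b t| <= `|y - t| + `|s y - s t|.
    have -> : ph b y - ph b t = (y - t) +i* (if b then s y - s t else - (s y - s t)).
      rewrite /ph; case: b => /=; first by simpc. simpc; congr (_ +i* _); exact: addrC.
    have := normC_bound (y - t) (if b then s y - s t else - (s y - s t)).
    by case: b => /=; rewrite ?normrN.
  have L1 := Glip (ph b y) (ph b t).
  have L2 := Glip (ph b t) (ph b y).
  rewrite distrC in L2.
  rewrite ler_norml; apply/andP; split; nra.
have m11 : (-1 : R) <= 1 by lra.
have [cp cpI cpM] := EVT_max m11 (f := fun x => G (ph true x)) ltac:(apply: continuous_subspaceT; exact: (fcont true)).
have [cm cmI cmM] := EVT_max m11 (f := fun x => G (ph false x)) ltac:(apply: continuous_subspaceT; exact: (fcont false)).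
have cpI' : -1 <= cp <= 1 by move: cpI; rewrite in_itv.
have cmI' : -1 <= cm <= 1 by move: cmI; rewrite in_itv.
case: (lerP (1 + Nr) (G (ph true cp))) => [h|hp].
  by exists (ph true cp); split; [exact: ph1 | exact: Gdaug (ph1 _ _ cpI') h].
case: (lerP (1 + Nr) (G (ph false cm))) => [h|hm].
  by exists (ph false cm); split; [exact: ph1 | exact: Gdaug (ph1 _ _ cmI') h].
exfalso.
pose d := Num.min (1 + Nr - G (ph true cp)) (1 + Nr - G (ph false cm)).
have d1 : d <= 1 + Nr - G (ph true cp) by rewrite ge_min lexx.
have d2 : d <= 1 + Nr - G (ph false cm) by rewrite ge_min lexx orbT.
have d0 : 0 < d by rewrite lt_min !subr_gt0 hp hm.
have e0 : 0 < (d / 2)%:C by rewrite ltcR divr_gt0.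
have [lam [lam1 Hl]] := key HS_C HJ HT e0 HN.
have Hlam : 1 + Nr - d / 2 <= G lam.
  by have := Hl _ (Hcc lam); rewrite GE NE C1 -rmorphD -rmorphB lecR.
move: lam lam1 Hl Hlam; case=> x y lam1 _ Hlam.
have xy : x ^+ 2 + y ^+ 2 = 1.
  move: lam1; rewrite normc_def /= C1 => -[] /(congr1 (fun z => z ^+ 2)).
  by rewrite sqr_sqrtr ?addr_ge0 ?sqr_ge0 // expr1n.
have xI : -1 <= x <= 1 by apply/andP; split; nra.
have sx : s x = `|y|.
  by rewrite /s -sqrtr_sqr; congr Num.sqrt; rewrite -xy expr2; ring.
have [b Eb] : exists b, x +i* y = ph b x.
  case: (lerP 0 y) => y0.
    by exists true; rewrite /ph /= sx ger0_norm.
  by exists false; rewrite /ph /= sx ltr0_norm ?opprK.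
rewrite Eb in Hlam.
case: b Eb Hlam => _ Hlam.
  have := cpM x; rewrite in_itv /= => /(_ xI); lra.
have := cmM x; rewrite in_itv /= => /(_ xI); lra.
Qed.



End Cplx.

Local Open Scope ring_scope.
Local Open Scope complex_scope.

Theorem corollary2p2 (R : realType) :
  cor2p2_over R /\ cor2p2_over R[i].
Proof.
split; [exact: real_case | exact: complex_case].
Qed.
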